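(* None of the semantics $\mathit{na}$, $\mathit{stg}$, $\mathit{cf2}$, $\mathit{tfcf2}$, $\mathit{cf1.5}$, $\mathit{stg2}$, $\mathit{tfstg2}$, $\mathit{stg1.5}$ satisfies the reinstatement criterion.
   Context: An argumentation framework (AF) is $\mathcal{F}=(A_{\mathcal{F}},R_{\mathcal{F}})$ with $R_{\mathcal{F}}\subseteq A_{\mathcal{F}}\times A_{\mathcal{F}}$; $a\rightarrow b$ means $(a,b)\in R_{\mathcal{F}}$. $S$ defends $a$ if every attacker of $a$ is attacked by some element of $S$. A semantics $\sigma$ (assigning a set $\sigma(\mathcal{F})$ of subsets of $A_{\mathcal{F}}$ to each AF) satisfies the reinstatement criterion if for every AF $\mathcal{F}$ and every $S\in\sigma(\mathcal{F})$, whenever $S$ defends an argument $a$, then $a\in S$. $\mathcal{F}|_B=(A_{\mathcal{F}}\cap B,R_{\mathcal{F}}\cap(B\times B))$. Conflict-free: no $a,b\in S$ with $a\rightarrow b$. $\mathit{na}$: $\subseteq$-maximal conflict-free sets. $S^\oplus=S\cup\{x:\exists y\in S,\ y\rightarrow x\}$; $\mathit{stg}$: conflict-free $S$ with no conflict-free $T$ such that $S^\oplus\subsetneq T^\oplus$. $\mathrm{SCC}$: strongly connected components of the attack graph. $D_S(X)=\{b\in X:\exists a\in S\setminus X,\ a\rightarrow b\}$. $\mathit{cf2}$: $S\in\mathit{cf2}(\mathcal{F})$ iff either $|\mathrm{SCC}(\mathcal{F})|=1$ and $S$ is naive in $\mathcal{F}$, or $|\mathrm{SCC}(\mathcal{F})|\ne1$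 and for each $X\in\mathrm{SCC}(\mathcal{F})$, $S\cap X\in\mathit{cf2}(\mathcal{F}|_{X\setminus D_S(X)})$, recursively (membership requires the recursion to be well-founded). $\mathit{stg2}$: same with stage. $\mathit{tfcf2}$/$\mathit{tfstg2}$: $C^0_S(a)=\mathrm{SCC}(a)$; $C^{\alpha+1}_S(a)$ = component of $a$ in $\mathcal{F}|_{C^\alpha_S(a)\setminus D_S(C^\alpha_S(a))}$; at limits $\lambda$, component of $a$ in $\mathcal{F}|_{\bigcap_{\alpha<\lambda}C^\alpha_S(a)}$; $\alpha_S(a)$ = least $\alpha$ with $a\notin C^\alpha_S(a)$ or $C^{\alpha+1}_S(a)=C^\alpha_S(a)$; $S$ is a member iff conflict-free and for each $a$, $a\notin C^{\alpha_S(a)}_S(a)$ or $S\cap C^{\alpha_S(a)}_S(a)$ is naive (resp. stage) in $\mathcal{F}|_{C^{\alpha_S(a)}_S(a)}$. $\mathit{cf1.5}$/$\mathit{stg1.5}$: $S$ conflict-free and for each $X\in\mathrm{SCC}(\mathcal{F})$, $S\cap X$ is naive (resp. stage) in $\mathcal{F}|_{X\setminus D_S(X)}$. *)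

(* Defs.v *)
From mathcomp Require Import all_boot.
Set Implicit Arguments. Unset Strict Implicit. Unset Printing Implicit Defensive.

(* An AF: a finite set of arguments and an attack relation; the effective
   attack relation is rel_ restricted to args x args. *)
Record AF (T : finType) := mkAF { args : {set T}; rel_ : rel T }.

Section AFDefs.
Variable T : finType.
Implicit Types (F : AF T) (S X B : {set T}).

Definition att F : rel T :=
  fun a b => [&& a \in args F, b \in args F & rel_ F a b].

Definition restrict F B : AF T := mkAF (args F :&: B) (rel_ F).

Definition defends F S (a : T) : Prop :=
  forall b, att F b a -> exists2 c, c \in S & att F c b.

Definition conflict_free F S : Prop :=
  S \subset args F /\ forall a b, a \in S -> b \in S -> ~~ att F a b.

Definition naive F S : Prop :=
  conflict_free F S /\ forall S', conflict_free F S' -> S \subset S' -> S' = S.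

Definition range F S : {set T} :=
  S :|: [set x | [exists y, (y \in S) && att F y x]].

Definition stage F S : Prop :=
  conflict_free F S /\
  ~ (exists S', conflict_free F S' /\ range F S \proper range F S').

(* strongly connected component of a (empty if a is not an argument) *)
Definition scc F (a : T) : {set T} :=
  [set b in args F | connect (att F) a b && connect (att F) b a].

Definition SCCs F : {set {set T}} := [set scc F a | a in args F].

Definition Dset F S X : {set T} :=
  [set b in X | [exists a, [&& a \in S, a \notin X & att F a b]]].

Inductive scc_rec (base : AF T -> {set T} -> Prop) : AF T -> {set T} -> Prop :=
| scc_rec_one F S :
    #|SCCs F| = 1 -> base F S -> scc_rec base F S
| scc_rec_many F S :
    #|SCCs F| <> 1 -> S \subset args F ->
    (forall X, X \in SCCs F -> scc_rec base (restrict F (X :\: Dset F S X)) (S :&: X)) ->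
    scc_rec base F S.

Definition scc_one_step (base : AF T -> {set T} -> Prop) F S : Prop :=
  conflict_free F S /\
  forall X, X \in SCCs F -> base (restrict F (X :\: Dset F S X)) (S :&: X).

(* C^n_S(a); on finite AFs the sequence reaches alpha_S(a) at a finite stage,
   so limit stages are never needed. *)
Fixpoint Cseq F S (a : T) (n : nat) : {set T} :=
  match n with
  | 0 => scc F a
  | n'.+1 => let C := Cseq F S a n' in scc (restrict F (C :\: Dset F S C)) a
  end.

Definition is_alpha F S (a : T) (n : nat) : Prop :=
  (a \notin Cseq F S a n \/ Cseq F S a n.+1 = Cseq F S a n) /\
  (forall m, m < n -> a \in Cseq F S a m /\ Cseq F S a m.+1 <> Cseq F S a m).

Definition scc_tf (base : AF T -> {set T} -> Prop) F S : Prop :=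
  conflict_free F S /\
  forall a n, a \in args F -> is_alpha F S a n ->
    a \notin Cseq F S a n \/
    base (restrict F (Cseq F S a n)) (S :&: Cseq F S a n).

End AFDefs.

Definition semantics := forall T : finType, AF T -> {set T} -> Prop.

Definition na_sem : semantics := fun T => @naive T.
Definition stg_sem : semantics := fun T => @stage T.
Definition cf2_sem : semantics := fun T => scc_rec (@naive T).
Definition stg2_sem : semantics := fun T => scc_rec (@stage T).
Definition tfcf2_sem : semantics := fun T => scc_tf (@naive T).
Definition tfstg2_sem : semantics := fun T => scc_tf (@stage T).
Definition cf15_sem : semantics := fun T => scc_one_step (@naive T).
Definition stg15_sem : semantics := fun T => scc_one_step (@stage T).

Definition reinstatement (sigma : semantics) : Prop :=
  forall (T : finType) (F : AF T) (S : {set T}) (a : T),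
    sigma T F S -> a \in args F -> defends F S a -> a \in S.

(* Main.v *)
Require Import Defs.
From mathcomp Require Import all_boot.
Set Implicit Arguments. Unset Strict Implicit.

Definition T3 := 'I_3.
Definition o0 : T3 := @Ordinal 3 0 isT.
Definition o1 : T3 := @Ordinal 3 1 isT.
Definition o2 : T3 := @Ordinal 3 2 isT.
Definition F3 : AF T3 := mkAF setT (fun x y : T3 => val y == (val x).+1 %% 3).
Definition S3 : {set T3} := [set o0].

Lemma attE x y : att F3 x y = (val y == (val x).+1 %% 3).
Proof. by rewrite /att /F3 /= !in_setT. Qed.

Lemma I3 (x : T3) : [\/ x = o0, x = o1 | x = o2].
Proof.
case: x => [[|[|[|m]]] Hm]; [constructor 1|constructor 2|constructor 3|by []];
  by apply: val_inj.
Qed.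

Lemma confl x y : x != y -> att F3 x y || att F3 y x.
Proof. by rewrite !attE; case: (I3 x) => ->; case: (I3 y) => ->. Qed.

Lemma cf_uniq S x y : conflict_free F3 S -> x \in S -> y \in S -> x = y.
Proof.
case=> _ H Hx Hy; apply/eqP; apply/negP => /negP /confl /orP [] Ha.
- by move: (H _ _ Hx Hy); rewrite Ha.
- by move: (H _ _ Hy Hx); rewrite Ha.
Qed.

Lemma rangeP S x : x \in range F3 S -> exists2 y, y \in S & (y == x) || att F3 y x.
Proof.
rewrite /range inE => /orP [Hx|]; first by exists x; rewrite ?eqxx.
by rewrite inE => /existsP [y /andP [Hy Ha]]; exists y; rewrite ?Ha ?orbT.
Qed.

Lemma cf3 : conflict_free F3 S3.
Proof.
split; first by apply/subsetP => x; rewrite in_setT.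
by move=> a b; rewrite !in_set1 => /eqP -> /eqP ->; rewrite attE.
Qed.

Lemma def3 : defends F3 S3 o2.
Proof.
move=> b; rewrite attE; case: (I3 b) => -> // _.
by exists o0; rewrite ?in_set1 ?attE.
Qed.
Lemma in3 : o2 \in args F3. Proof. by rewrite in_setT. Qed.
Lemma notin3 : o2 \notin S3. Proof. by rewrite in_set1. Qed.

Lemma naive3 : naive F3 S3.
Proof.
split; first exact: cf3.
move=> S' HS' Hsub; apply/setP => x; rewrite in_set1; apply/idP/eqP.
- move=> Hx; have Ho : o0 \in S' by apply: (subsetP Hsub); rewrite in_set1.
  exact: (cf_uniq HS' Hx Ho).
- by move=> ->; apply: (subsetP Hsub); rewrite in_set1.
Qed.

Lemma range3 x : x \in range F3 S3 -> x != o2.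
Proof.
case/rangeP => y; rewrite in_set1 => /eqP ->; rewrite attE.
by case: (I3 x) => ->.
Qed.

Lemma stage3 : stage F3 S3.
Proof.
split; first exact: cf3.
case=> S' [HS' /properP [Hsub [z Hz Hnz]]].
have R0 : o0 \in range F3 S3 by rewrite /range !inE eqxx.
have R1 : o1 \in range F3 S3.
  rewrite /range !inE; apply/existsP; exists o0; by rewrite inE eqxx attE.
have Hz2 : z = o2.
  by case: (I3 z) => // E; move: Hnz; rewrite E ?R0 ?R1.
subst z.
have H0 : o0 \in range F3 S' by apply: (subsetP Hsub).
have H1 : o1 \in range F3 S' by apply: (subsetP Hsub).
case/rangeP: Hz => y2 Hy2 E2.
case/rangeP: H0 => y0 Hy0 E0.
case/rangeP: H1 => y1 Hy1 E1.
have e1 := cf_uniq HS' Hy2 Hy0.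
have e2 := cf_uniq HS' Hy2 Hy1.
subst y0 y1.
move: E0 E1 E2; rewrite !attE.
by case: (I3 y2) => ->.
Qed.

Lemma restrT : restrict F3 setT = F3.
Proof. by rewrite /restrict setIT. Qed.

Lemma D3 : Dset F3 S3 setT = set0.
Proof.
apply/setP => x; rewrite inE in_set0; apply/negP => /andP [_ /existsP [y]].
by rewrite in_setT andbF.
Qed.

Lemma E3 : restrict F3 (setT :\: Dset F3 S3 setT) = F3.
Proof. by rewrite D3 setD0 restrT. Qed.

Lemma conn x y : connect (att F3) x y.
Proof.
have step : forall u v, att F3 u v -> connect (att F3) u v by move=> u v; apply: connect1.
case: (I3 x) => ->; case: (I3 y) => ->; rewrite ?connect0 //.
- by apply: step; rewrite attE.
- by apply: (connect_trans (step o0 o1 _) (step o1 o2 _)); rewrite attE.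
- by apply: (connect_trans (step o1 o2 _) (step o2 o0 _)); rewrite attE.
- by apply: step; rewrite attE.
- by apply: step; rewrite attE.
- by apply: (connect_trans (step o2 o0 _) (step o0 o1 _)); rewrite attE.
Qed.

Lemma scc3 a : scc F3 a = setT.
Proof. by apply/setP => b; rewrite !inE !conn. Qed.

Lemma Cseq3 a n : Cseq F3 S3 a n = setT.
Proof.
elim: n => [|n IH] /=; first exact: scc3.
by rewrite IH E3 scc3.
Qed.

Lemma sccs3 : SCCs F3 = [set setT].
Proof.
apply/setP => X; rewrite in_set1; apply/imsetP/eqP.
- by case=> a _ ->; rewrite scc3.
- by move=> ->; exists o0; rewrite ?in_setT ?scc3.
Qed.

Lemma one3 : #|SCCs F3| = 1.
Proof. by rewrite sccs3 cards1. Qed.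

Lemma naive3' : naive (restrict F3 setT) (S3 :&: setT).
Proof. rewrite restrT setIT; exact: naive3. Qed.
Lemma stage3' : stage (restrict F3 setT) (S3 :&: setT).
Proof. rewrite restrT setIT; exact: stage3. Qed.
Lemma naive3'' : naive (restrict F3 (setT :\: Dset F3 S3 setT)) (S3 :&: setT).
Proof. rewrite E3 setIT; exact: naive3. Qed.
Lemma stage3'' : stage (restrict F3 (setT :\: Dset F3 S3 setT)) (S3 :&: setT).
Proof. rewrite E3 setIT; exact: stage3. Qed.

Lemma bad (sigma : semantics) : sigma T3 F3 S3 -> ~ reinstatement sigma.
Proof.
move=> H R; move: (R _ _ _ _ H in3 def3); by rewrite (negbTE notin3).
Qed.

Theorem theorem11 :
  ~ reinstatement na_sem /\ ~ reinstatement stg_sem /\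
  ~ reinstatement cf2_sem /\ ~ reinstatement tfcf2_sem /\
  ~ reinstatement cf15_sem /\ ~ reinstatement stg2_sem /\
  ~ reinstatement tfstg2_sem /\ ~ reinstatement stg15_sem.
Proof.
split; [apply: bad; exact: naive3|].
split; [apply: bad; exact: stage3|].
split; [apply: bad; apply: scc_rec_one; [exact: one3|exact: naive3]|].
split; [apply: bad; split; [exact: cf3|move=> a n _ _; right; rewrite Cseq3; exact: naive3']|].
split; [apply: bad; split; [exact: cf3|move=> X; rewrite sccs3 in_set1 => /eqP ->; exact: naive3'']|].
split; [apply: bad; apply: scc_rec_one; [exact: one3|exact: stage3]|].
split; [apply: bad; split; [exact: cf3|move=> a n _ _; right; rewrite Cseq3; exact: stage3']|].
apply: bad; split; [exact: cf3|move=> X; rewrite sccs3 in_set1 => /eqP ->; exact: stage3''].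
Qed.
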